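(* Let $n\ge3$ and let $D$ be an affine $n$-diagram. If $D$ lies in $O_n$, then for every integer $i$ the number of intersections of $D$ with the line $x=i+\tfrac12$ is even; if $D$ does not lie in $O_n$, then for every integer $i$ this number is odd.
   Context: An affine $n$-diagram consists of the nodes $\mathbb{Z}\times\{0,1\}\subset\mathbb{R}^2$ together with curves called edges such that: every node is an endpoint of exactly one edge; edges lie in $\mathbb{R}\times[0,1]$; an edge not joining two nodes is an infinite horizontal line meeting no node, and there are finitely many such; no two edges intersect; the diagram is invariant under horizontal translation by $n$. Diagrams are taken up to isotopy. The number of intersections of a diagram $D$ with the line $x=i+\tfrac12$ means the minimal number of intersection points over all diagrams isotopic to $D$. For a commutative ring $R$ with an invertible element $v$, $D_n$ is the $R$-algebra with basis the affine $n$-diagrams (product: stack, remove $x$ closed loops, multiply by $(v+v^{-1})^x$), and $O_n$ is the $R$-span of the diagrams for which the number of intersections with $x=i+\tfrac12$ is even for every integer $i$; a diagram ''lies in $O_n$'' if it is one of these. *)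

(* Defs.v *)
From Stdlib Require Import ZArith List Bool Arith.
Import ListNotations.
Open Scope Z_scope.

(* A node (x, s) of Z x {0,1}: s = false means height 0 (bottom),
   s = true means height 1 (top). *)
Definition node := (Z * bool)%type.

(* Linear order on nodes obtained by reading the boundary of the strip
   R x [0,1] (a topological disk whose boundary is a circle through +-oo):
   bottom row from left to right, then top row from right to left.
   Chords in a disk are disjoint iff their endpoints do not interleave. *)
Definition blt (p q : node) : Prop :=
  match p, q with
  | (x, false), (y, false) => x < y
  | (_, false), (_, true) => True
  | (_, true), (_, false) => False
  | (x, true), (y, true) => y < x
  end.

(* An affine n-diagram up to isotopy: an n-periodic non-crossing perfect
   matching of the nodes (the edges joining nodes; in the simply connected
   strip the isotopy class of such an edge is determined by its endpoints),
   together with the number of infinite horizontal lines.  A horizontal line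
   separates the bottom nodes from the top nodes, so lines can only occur if
   no edge joins a bottom node to a top node; all lines are then isotopic
   to one another, so only their number matters. *)
Record affine_diagram (n : Z) := {
  mt : node -> node;
  nlines : nat;
  mt_invol : forall p, mt (mt p) = p;
  mt_nofix : forall p, mt p <> p;
  mt_periodic : forall x s,
    mt (x + n, s) = (fst (mt (x, s)) + n, snd (mt (x, s)));
  mt_noncross : forall p q,
    blt p (mt p) -> blt q (mt q) ->
    ~ (blt p q /\ blt q (mt p) /\ blt (mt p) (mt q));
  lines_no_through : (0 < nlines)%nat -> forall p, snd (mt p) = snd p
}.

Arguments mt {n} _ _.
Arguments nlines {n} _.

(* The maximal horizontal span |x(mt p) - x(p)| of an edge; by periodicity it
   suffices to look at the nodes with 0 <= x < n. *)
Definition span {n : Z} (D : affine_diagram n) : Z :=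
  fold_right Z.max 0
    (flat_map (fun j : nat =>
       [Z.abs (fst (mt D (Z.of_nat j, false)) - Z.of_nat j);
        Z.abs (fst (mt D (Z.of_nat j, true)) - Z.of_nat j)])
      (seq 0 (Z.to_nat n))).

Definition crosses_at {n : Z} (D : affine_diagram n) (i : Z) (p : node) : bool :=
  (fst p <=? i) && (i <? fst (mt D p)).

(* Minimal number of intersections of D with the line x = i + 1/2:
   every horizontal line meets it once, and an edge (drawn minimally) meets
   it once iff its endpoints lie on different sides, otherwise not at all.
   Each crossing edge is counted via its left endpoint p (x(p) <= i), which
   necessarily satisfies x(p) >= i - span D, so the finite window below
   captures all crossing edges. *)
Definition num_intersections {n : Z} (D : affine_diagram n) (i : Z) : nat :=
  Nat.add (nlines D)
   (length (filter (crosses_at D i)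
     (flat_map (fun k : nat => [(i - Z.of_nat k, false); (i - Z.of_nat k, true)])
        (seq 0 (S (Z.to_nat (span D))))))).

(* D lies in O_n: it is one of the spanning diagrams of O_n, i.e. the number
   of intersections with every line x = i + 1/2 is even. *)
Definition lies_in_O {n : Z} (D : affine_diagram n) : Prop :=
  forall i : Z, Nat.even (num_intersections D i) = true.

(* Main.v *)
Require Import Defs.
From Stdlib Require Import ZArith List Bool Arith.
From Stdlib Require Import Lia.
Import ListNotations.
Open Scope Z_scope.

Fixpoint colsF (i : Z) (m : nat) : list node :=
  match m with O => [] | S m' => (i,false)::(i,true)::colsF (i-1) m' end.

Lemma flat_map_colsF i m k :
  flat_map (fun k : nat => [(i - Z.of_nat k, false); (i - Z.of_nat k, true)]) (seq k m)
  = colsF (i - Z.of_nat k) m.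
Proof.
  revert k. induction m as [|m IH]; intros k; simpl; auto.
  rewrite IH. replace (i - Z.of_nat (S k)) with (i - Z.of_nat k - 1) by lia. reflexivity.
Qed.

Lemma colsF_In i m p : In p (colsF i m) -> i - Z.of_nat m < fst p <= i.
Proof.
  revert i. induction m as [|m IH]; intros i H; simpl in H; [contradiction|].
  destruct H as [H|[H|H]]; try (subst; simpl; lia).
  apply IH in H. lia.
Qed.

Lemma colsF_snoc i m : colsF i (S m) = colsF i m ++ [(i - Z.of_nat m,false);(i - Z.of_nat m,true)].
Proof.
  revert i. induction m as [|m IH]; intros i.
  - simpl. rewrite Z.sub_0_r. reflexivity.
  - change (colsF i (S (S m))) with ((i,false)::(i,true)::colsF (i-1) (S m)).
    rewrite IH. simpl.
    replace (i - 1 - Z.of_nat m) with (i - Z.of_nat (S m)) by lia. reflexivity.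
Qed.

Definition cnt (f : node -> bool) (l : list node) : nat := length (filter f l).

Lemma cnt_cons f a l : cnt f (a::l) = (Nat.b2n (f a) + cnt f l)%nat.
Proof. unfold cnt; simpl; destruct (f a); reflexivity. Qed.

Lemma cnt_app f l1 l2 : cnt f (l1 ++ l2) = (cnt f l1 + cnt f l2)%nat.
Proof. unfold cnt. rewrite filter_app, length_app. reflexivity. Qed.

Lemma cnt_split f g h l :
  (forall p, In p l -> Nat.b2n (f p) = (Nat.b2n (g p) + Nat.b2n (h p))%nat) ->
  cnt f l = (cnt g l + cnt h l)%nat.
Proof.
  induction l as [|a l IH]; intros H; [reflexivity|].
  rewrite !cnt_cons. rewrite IH by (intros; apply H; right; auto).
  specialize (H a (or_introl eq_refl)). lia.
Qed.

Lemma cnt_zero f l : (forall p, In p l -> f p = false) -> cnt f l = 0%nat.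
Proof.
  induction l as [|a l IH]; intros H; [reflexivity|].
  rewrite cnt_cons, IH by (intros; apply H; right; auto).
  rewrite (H a (or_introl eq_refl)). reflexivity.
Qed.

Definition neqb (p q : node) : bool := (fst p =? fst q) && Bool.eqb (snd p) (snd q).

Lemma neqb_spec p q : reflect (p = q) (neqb p q).
Proof.
  destruct p as [x s], q as [y t]; unfold neqb; simpl.
  destruct (Z.eqb_spec x y); destruct s, t; simpl; constructor; congruence.
Qed.

Lemma cnt_eq i m a :
  cnt (fun p => neqb p a) (colsF i m) =
  Nat.b2n ((i - Z.of_nat m <? fst a) && (fst a <=? i)).
Proof.
  revert i. induction m as [|m IH]; intros i.
  - simpl. unfold cnt. simpl.
    destruct (Z.ltb_spec (i - 0) (fst a)), (Z.leb_spec (fst a) i); simpl; auto; lia.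
  - simpl colsF. rewrite !cnt_cons, IH. destruct a as [x s]. unfold neqb. simpl fst; simpl snd.
    destruct (Z.eqb_spec i x), (Z.ltb_spec (i - 1 - Z.of_nat m) x),
      (Z.leb_spec x (i-1)), (Z.ltb_spec (i - Z.of_nat (S m)) x), (Z.leb_spec x i);
      destruct s; simpl; lia.
Qed.

Lemma even_step a b : (a = b \/ a = b + 2 \/ b = a + 2)%nat -> Nat.even a = Nat.even b.
Proof.
  intros [H|[H|H]]; subst; auto; rewrite Nat.even_add; simpl; destruct Nat.even; auto.
Qed.

Lemma fold_max_ge l a : In a l -> a <= fold_right Z.max 0 l.
Proof. induction l as [|b l IH]; simpl; [tauto|]. intros [H|H]; [subst; lia|]. apply IH in H; lia. Qed.

Lemma fold_max_nonneg l : 0 <= fold_right Z.max 0 l.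
Proof. induction l; simpl; lia. Qed.

Section S.
Variable n : Z.
Hypothesis hn : 0 < n.
Variable D : affine_diagram n.

Lemma per_nat x s (k : nat) :
  fst (mt D (x + Z.of_nat k * n, s)) = fst (mt D (x, s)) + Z.of_nat k * n.
Proof.
  induction k as [|k IH].
  - simpl. rewrite !Z.add_0_r. reflexivity.
  - rewrite Nat2Z.inj_succ. replace (x + Z.succ (Z.of_nat k) * n) with ((x + Z.of_nat k * n) + n) by lia.
    rewrite mt_periodic. simpl. rewrite IH. lia.
Qed.

Lemma per_Z x s k :
  fst (mt D (x + k * n, s)) = fst (mt D (x, s)) + k * n.
Proof.
  destruct (Z_le_gt_dec 0 k).
  - replace k with (Z.of_nat (Z.to_nat k)) by lia. apply per_nat.
  - pose proof (per_nat (x + k * n) s (Z.to_nat (- k))) as H.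
    replace (x + k * n + Z.of_nat (Z.to_nat (- k)) * n) with x in H by lia. lia.
Qed.

Lemma span_bound p : Z.abs (fst (mt D p) - fst p) <= span D.
Proof.
  destruct p as [x s].
  pose proof (Z.div_mod x n ltac:(lia)) as Hx.
  pose proof (Z.mod_pos_bound x n hn) as Hb.
  set (j := x mod n) in *. set (k := x / n) in *.
  assert (E : fst (mt D (x, s)) - x = fst (mt D (j, s)) - j).
  { replace x with (j + k * n) at 1 by lia. rewrite per_Z. simpl. lia. }
  simpl fst. rewrite E.
  unfold span. apply fold_max_ge. apply in_flat_map.
  exists (Z.to_nat j). split.
  - apply in_seq. lia.
  - rewrite Z2Nat.id by lia. destruct s; simpl; auto.
Qed.

Lemma span_nonneg : 0 <= span D.
Proof. apply fold_max_nonneg. Qed.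

Lemma num_eq i : num_intersections D i =
  (nlines D + cnt (crosses_at D i) (colsF i (S (Z.to_nat (span D)))))%nat.
Proof.
  unfold num_intersections, cnt. rewrite flat_map_colsF. simpl Z.of_nat.
  rewrite Z.sub_0_r. reflexivity.
Qed.

Lemma step i : Nat.even (num_intersections D (i+1)) = Nat.even (num_intersections D i).
Proof.
  rewrite !num_eq.
  set (S0 := Z.to_nat (span D)).
  assert (HS : Z.of_nat S0 = span D) by (unfold S0; pose proof span_nonneg; lia).
  set (q0 := (i+1, false)). set (q1 := (i+1, true)).
  change (colsF (i+1) (S S0)) with (q0 :: q1 :: colsF (i+1-1) S0).
  replace (i+1-1) with i by lia.
  rewrite colsF_snoc, cnt_app, (cnt_cons _ q0), (cnt_cons _ q1).
  rewrite (cnt_zero (crosses_at D i) [(i - Z.of_nat S0, false); (i - Z.of_nat S0, true)]).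
  2:{ intros p Hp. unfold crosses_at. pose proof (span_bound p).
      destruct Hp as [Hp|[Hp|[]]]; subst p; simpl in *;
      destruct (Z.leb_spec (i - Z.of_nat S0) i); match goal with |- context[Z.ltb ?a ?b] => destruct (Z.ltb_spec a b) end; simpl; auto; lia. }
  rewrite (cnt_split (crosses_at D i) (crosses_at D (i+1))
             (fun p => neqb p (mt D q0) || neqb p (mt D q1))).
  2:{ intros p Hp. apply colsF_In in Hp. unfold crosses_at.
      destruct (neqb_spec p (mt D q0)) as [E0|E0]; destruct (neqb_spec p (mt D q1)) as [E1|E1].
      - exfalso. assert (mt D (mt D q0) = mt D (mt D q1)) by congruence.
        rewrite !mt_invol in H. unfold q0, q1 in H. congruence.
      - assert (mt D p = q0) by (rewrite E0, mt_invol; reflexivity). rewrite H. unfold q0. simpl fst.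
        destruct (Z.leb_spec (fst p) i), (Z.ltb_spec i (i+1)), (Z.leb_spec (fst p) (i+1)),
          (Z.ltb_spec (i+1) (i+1)); simpl; lia.
      - assert (mt D p = q1) by (rewrite E1, mt_invol; reflexivity). rewrite H. unfold q1. simpl fst.
        destruct (Z.leb_spec (fst p) i), (Z.ltb_spec i (i+1)), (Z.leb_spec (fst p) (i+1)),
          (Z.ltb_spec (i+1) (i+1)); simpl; lia.
      - assert (fst (mt D p) <> i + 1).
        { intro Hm. destruct (mt D p) as [y t] eqn:Em. simpl in Hm. subst y.
          assert (p = mt D (i+1, t)) by (rewrite <- Em, mt_invol; reflexivity).
          destruct t; [apply E1|apply E0]; exact H. }
        destruct (Z.leb_spec (fst p) i), (Z.ltb_spec i (fst (mt D p))), (Z.leb_spec (fst p) (i+1)),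
          (Z.ltb_spec (i+1) (fst (mt D p))); simpl; lia. }
  rewrite (cnt_split (fun p => neqb p (mt D q0) || neqb p (mt D q1))
             (fun p => neqb p (mt D q0)) (fun p => neqb p (mt D q1))).
  2:{ intros p _. destruct (neqb_spec p (mt D q0)) as [E0|E0]; destruct (neqb_spec p (mt D q1)) as [E1|E1];
      simpl; auto.
      exfalso. assert (mt D (mt D q0) = mt D (mt D q1)) by congruence.
      rewrite !mt_invol in H. unfold q0, q1 in H. congruence. }
  rewrite !cnt_eq.
  pose proof (span_bound q0) as B0. pose proof (span_bound q1) as B1.
  assert (Iff : fst (mt D q0) = i+1 <-> fst (mt D q1) = i+1).
  { assert (K : forall a b, (a = q0 /\ b = q1) \/ (a = q1 /\ b = q0) ->
       fst (mt D a) = i+1 -> fst (mt D b) = i+1).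
    { intros a b Hab Ha. destruct (mt D a) as [y t] eqn:Ea. simpl in Ha. subst y.
      destruct Hab as [[-> ->]|[-> ->]]; destruct t.
      - assert (mt D q1 = q0) by (rewrite <- (mt_invol _ D q0), Ea; reflexivity). rewrite H; reflexivity.
      - exfalso. apply (mt_nofix _ D q0). rewrite Ea. reflexivity.
      - exfalso. apply (mt_nofix _ D q1). rewrite Ea. reflexivity.
      - assert (mt D q0 = q1) by (rewrite <- (mt_invol _ D q1), Ea; reflexivity). rewrite H; reflexivity. }
    split; apply K; auto. }
  unfold crosses_at. unfold q0, q1 in *. simpl fst in *.
  set (x0 := fst (mt D (i+1, false))) in *. set (x1 := fst (mt D (i+1, true))) in *.
  set (A := cnt (fun p => (fst p <=? i + 1) && (i + 1 <? fst (mt D p))) (colsF i S0)).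
  apply even_step.
  destruct (Z.leb_spec (i+1) (i+1)), (Z.ltb_spec (i+1) x0), (Z.ltb_spec (i+1) x1),
    (Z.ltb_spec (i - Z.of_nat S0) x0), (Z.leb_spec x0 i),
    (Z.ltb_spec (i - Z.of_nat S0) x1), (Z.leb_spec x1 i); simpl; lia.
Qed.

Lemma all_same i : Nat.even (num_intersections D i) = Nat.even (num_intersections D 0).
Proof.
  assert (Hp : forall k : nat, Nat.even (num_intersections D (Z.of_nat k)) = Nat.even (num_intersections D 0)).
  { induction k as [|k IH]; auto. rewrite Nat2Z.inj_succ, <- Z.add_1_r, step. exact IH. }
  assert (Hm : forall k : nat, Nat.even (num_intersections D (- Z.of_nat k)) = Nat.even (num_intersections D 0)).
  { induction k as [|k IH]; auto. rewrite <- IH, <- step. f_equal. f_equal. lia. }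
  destruct (Z_le_gt_dec 0 i).
  - replace i with (Z.of_nat (Z.to_nat i)) by lia. apply Hp.
  - replace i with (- Z.of_nat (Z.to_nat (- i))) by lia. apply Hm.
Qed.
End S.

Theorem proposition2p3p4 (n : Z) (hn : (3 <= n)%Z) (D : affine_diagram n) :
  (lies_in_O D -> forall i : Z, Nat.even (num_intersections D i) = true) /\
  (~ lies_in_O D -> forall i : Z, Nat.odd (num_intersections D i) = true).
Proof.
  split.
  - intros H i. apply H.
  - intros H i. rewrite <- Nat.negb_even.
    destruct (Nat.even (num_intersections D i)) eqn:E; auto.
    exfalso. apply H. intros j. rewrite (all_same n ltac:(lia) D j), <- (all_same n ltac:(lia) D i).
    exact E.
Qed.
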